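(* Let $G$ be a graph of order $n\ge2$. The following are equivalent: (1) $G\cong K_{n-r}\sqcup rK_1$ for some $r$ with $n-r\ge2$; (2) $\operatorname{zir}(G)=n-1$; (3) $\operatorname{Z}(G)=n-1$; (4) $\overline{\operatorname{Z}}(G)=n-1$; (5) $\operatorname{ZIR}(G)=n-1$.
   Context: $\sqcup$ denotes disjoint union and $rK_1$ is $r$ isolated vertices. Zero forcing: a blue vertex $u$ changes a white vertex $w$ to blue if $w$ is the only white neighbor of $u$; $B$ is a zero forcing set if from blue set $B$ eventually all vertices are blue; $\operatorname{Z}(G)$ is the minimum size of a zero forcing set and $\overline{\operatorname{Z}}(G)$ the maximum size of an inclusion-minimal zero forcing set. A nonempty $F\subseteq V(G)$ is a fort if every $v\notin F$ has $|N(v)\cap F|\ne1$. A private fort of $x\in S$ relative to $S$ is a fort $F$ with $S\cap F=\{x\}$; $S$ is a ZIr-set if every element of $S$ has a private fort. $\operatorname{zir}(G)$ / $\operatorname{ZIR}(G)$ are the minimum / maximum cardinality of an inclusion-maximal ZIr-set. *)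

(* Defs.v *)
From mathcomp Require Import all_boot.
Set Implicit Arguments. Unset Strict Implicit. Unset Printing Implicit Defensive.

(* A finite simple graph: vertex type T : finType, adjacency e : rel T,
   assumed symmetric and irreflexive (hypotheses of the theorem). *)
Section Graph.
Variables (T : finType) (e : rel T).

Definition force_step (S : {set T}) : {set T} :=
  S :|: [set w | [exists u in S,
            e u w && [forall x, (e u x && (x != w)) ==> (x \in S)]]].

(* Final colouring: forcing rounds stabilise after at most #|T| rounds. *)
Definition zf_closure (B : {set T}) : {set T} := iter #|T| force_step B.

Definition zero_forcing (B : {set T}) : bool := zf_closure B == [set: T].

(* Z(G): minimum size of a zero forcing set (V is always one). *)
Definition Znum : nat := \big[minn/#|T|]_(B : {set T} | zero_forcing B) #|B|.

Definition Zbar : nat := \max_(B : {set T} | minset zero_forcing B) #|B|.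

Definition fort (F : {set T}) : bool :=
  (F != set0) && [forall v in ~: F, #|[set u in F | e v u]| != 1].

Definition private_fort (S : {set T}) (x : T) (F : {set T}) : bool :=
  fort F && (S :&: F == [set x]).

Definition ZIr_set (S : {set T}) : bool :=
  [forall x in S, [exists F : {set T}, private_fort S x F]].

Definition zir : nat := \big[minn/#|T|]_(S : {set T} | maxset ZIr_set S) #|S|.
Definition ZIR : nat := \max_(S : {set T} | maxset ZIr_set S) #|S|.

End Graph.

Definition clique_plus_isolated (n m : nat) : rel 'I_n :=
  fun i j => (i != j) && (i < m) && (j < m).

(* Main.v *)
Require Import Defs.
From mathcomp Require Import all_boot zify.
Set Implicit Arguments. Unset Strict Implicit. Unset Printing Implicit Defensive.

Section Helpers.
Variables (T : finType) (e : rel T).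
Hypotheses (esy : symmetric e) (eir : irreflexive e) (hn : 2 <= #|T|).

Lemma fs_sub (S : {set T}) : S \subset force_step e S.
Proof. exact: subsetUl. Qed.

Lemma iter_sub k m (B : {set T}) : k <= m -> iter k (force_step e) B \subset iter m (force_step e) B.
Proof.
move=> /subnK <-; elim: (m - k) => [|d IH] //=.
by apply: subset_trans IH (fs_sub _).
Qed.

Lemma fs_force (S : {set T}) u w : u \in S -> e u w -> (forall x, e u x -> x != w -> x \in S) ->
  w \in force_step e S.
Proof.
move=> uS euw H; rewrite /force_step inE; apply/orP; right; rewrite inE.
apply/existsP; exists u; rewrite uS euw /=; apply/forallP => x; apply/implyP.
by case/andP => ?; apply: H.
Qed.

Lemma fort_step (F S : {set T}) : fort e F -> (forall x, x \in F -> x \notin S) ->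
  forall x, x \in F -> x \notin force_step e S.
Proof.
case/andP => _ /forallP fF dFS w wF; rewrite /force_step !inE negb_or dFS //=.
apply/negP; case/existsP => u /and3P[uS euw /forallP H].
have uF : u \notin F by apply: contraT => /negPn uF; rewrite (negbTE (dFS _ uF)) in uS.
have := fF u; rewrite inE uF /= => /negP; apply.
apply/cards1P; exists w; apply/setP => x; rewrite !inE.
apply/idP/idP => [/andP[xF eux]|/eqP ->]; last by rewrite wF euw.
apply: contraT => xw; have := H x; rewrite eux xw /= => xS.
by rewrite (negbTE (dFS _ xF)) in xS.
Qed.

Lemma fort_notZF (F B : {set T}) : fort e F -> (forall x, x \in F -> x \notin B) ->
  ~~ zero_forcing e B.
Proof.
move=> fF dFB; have: forall x, x \in F -> x \notin zf_closure e B.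
  rewrite /zf_closure; elim: #|T| => //= k IH; exact: fort_step.
case/andP: fF => /set0Pn [x xF] _ d; apply/negP => /eqP Z.
by have := d x xF; rewrite Z in_setT.
Qed.

Lemma ZF_of_iter k (B : {set T}) : k <= #|T| -> iter k (force_step e) B = setT -> zero_forcing e B.
Proof.
move=> kn H; rewrite /zero_forcing /zf_closure eqEsubset subsetT /=.
by rewrite -H; apply: iter_sub.
Qed.

Lemma zf1 q a : e q a -> zero_forcing e (~: [set q]).
Proof.
move=> eqa; apply: (@ZF_of_iter 1); first by apply: leq_trans hn.
change (force_step e (~: [set q]) = setT).
apply/setP => x; rewrite in_setT; case: (eqVneq x q) => [->|xq].
  apply: (@fs_force _ a).
  - by rewrite !inE; apply: contraTneq eqa => ->; rewrite eir.
  - by rewrite esy.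
  by move=> y _ yq; rewrite !inE.
by apply: (subsetP (fs_sub _)); rewrite !inE.
Qed.

Lemma zf2 p q u a : p != q -> u != p -> u != q -> e u p -> ~~ e u q -> e q a ->
  zero_forcing e (~: [set p; q]).
Proof.
move=> pq up uq eup nuq eqa; apply: (@ZF_of_iter 2) => //.
change (force_step e (force_step e (~: [set p; q])) = setT).
have S1 : ~: [set q] \subset force_step e (~: [set p; q]).
  apply/subsetP => x; rewrite in_setC in_set1 => xq; case: (eqVneq x p) => [->|xp].
    apply: (@fs_force _ u); first by rewrite !inE negb_or up uq.
      by [].
    by move=> y euy yp; rewrite !inE negb_or yp /=; apply: contraNneq nuq => <-.
  by apply: (subsetP (fs_sub _)); rewrite !inE negb_or xp.
apply/setP => x; rewrite in_setT; case: (eqVneq x q) => [->|xq].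
  apply: (@fs_force _ a).
  - apply: (subsetP S1); rewrite !inE; apply: contraTneq eqa => ->; rewrite eir //.
  - by rewrite esy.
  by move=> y _ yq; apply: (subsetP S1); rewrite !inE.
by apply: (subsetP (fs_sub _)); apply: (subsetP S1); rewrite !inE.
Qed.

End Helpers.

Section H2.
Variables (T : finType) (e : rel T).
Hypotheses (esy : symmetric e) (eir : irreflexive e) (hn : 2 <= #|T|).

Definition Form (K : {set T}) :=
  2 <= #|K| /\ forall x y, e x y = [&& x != y, x \in K & y \in K].

Lemma twin_form v : (exists x y, e x y) ->
  (forall w, w != v -> (exists b, e w b) ->
     forall u, u != w -> u != v -> e u w = e u v) -> exists K, Form K.
Proof.
move=> [x0 [y0 exy0]] tw.
have nzv : exists b, e v b.
  case: (eqVneq x0 v) => [<-|xv]; first by exists y0.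
  case: (eqVneq y0 v) => [yv|yv]; first by exists x0; rewrite -yv esy.
  have := tw x0 xv (ex_intro _ y0 exy0) y0; rewrite esy exy0.
  have -> : y0 != x0 by apply: contraTneq exy0 => ->; rewrite eir.
  by move=> /(_ isT yv) /esym H; exists y0; rewrite esy.
have help : forall x, x != v -> (exists b, e x b) -> e x v.
  move=> x xv [b exb]; case: (eqVneq b v) => [<-//|bv].
  have bx : b != x by apply: contraTneq exb => ->; rewrite eir.
  have ebv : e b v by rewrite -(tw x xv (ex_intro _ b exb) b bx bv) esy.
  have bnz : exists c, e b c by exists x; rewrite esy.
  have := tw b bv bnz x; rewrite eq_sym bx => /(_ isT xv) <-.
  exact: exb.
exists [set x | [exists y, e x y]]; split.
  have x0K : x0 \in [set x | [exists y, e x y]] by rewrite inE; apply/existsP; exists y0.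
  have y0K : y0 \in [set x | [exists y, e x y]] by rewrite inE; apply/existsP; exists x0; rewrite esy.
  have : [set x0; y0] \subset [set x | [exists y, e x y]].
    by apply/subsetP => z; rewrite !inE => /orP[] /eqP ->; [move: x0K | move: y0K]; rewrite inE.
  move/subset_leq_card; apply: leq_trans; rewrite cards2.
  by have -> : x0 != y0 by apply: contraTneq exy0 => ->; rewrite eir.
move=> x y; rewrite !inE; apply/idP/idP.
  move=> exy; rewrite (_ : x != y); last by apply: contraTneq exy => ->; rewrite eir.
  by apply/and3P; split=> //; apply/existsP; [exists y | exists x; rewrite esy].
case/and3P => xy /existsP xnz /existsP ynz.
have xnz' : exists b, e x b by case: xnz => b ?; exists b.
have ynz' : exists b, e y b by case: ynz => b ?; exists b.
case: (eqVneq x v) => [xv|xv].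
  by rewrite xv esy; apply: help; rewrite // -xv eq_sym.
case: (eqVneq y v) => [->|yv]; first exact: help.
by rewrite (tw y yv ynz' x xy xv); apply: help.
Qed.

End H2.

Section Big.
Variables (I : finType) (P : pred I) (F : I -> nat) (m : nat).

Lemma bmin_le j : P j -> \big[minn/m]_(i | P i) F i <= F j.
Proof.
move=> Pj; rewrite -big_filter; have : j \in filter P (index_enum I).
  by rewrite mem_filter Pj mem_index_enum.
elim: (filter P _) => //= h t IH; rewrite inE big_cons => /orP[/eqP->|jt].
  exact: geq_minl.
by rewrite geq_min IH ?orbT.
Qed.

Lemma bmin_ge c : c <= m -> (forall i, P i -> c <= F i) -> c <= \big[minn/m]_(i | P i) F i.
Proof.
move=> cm H; elim/big_ind: _ => // a b; rewrite leq_min => -> -> //.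
Qed.

Lemma bmin_ex : \big[minn/m]_(i | P i) F i = m \/
  exists i, P i /\ \big[minn/m]_(i | P i) F i = F i.
Proof.
elim/big_ind: _; [by left| |by move=> i Pi; right; exists i].
move=> a b [->|[i [Pi ->]]] [->|[j [Pj ->]]]; rewrite /minn;
  try (case: ifP => _); by [left | right; exists i | right; exists j].
Qed.

Lemma bmax_ex : \max_(i | P i) F i = 0 \/
  exists i, P i /\ \max_(i | P i) F i = F i.
Proof.
elim/big_ind: _; [by left| |by move=> i Pi; right; exists i].
move=> a b [->|[i [Pi ->]]] [->|[j [Pj ->]]]; rewrite /maxn;
  try (case: ifP => _); by [left | right; exists i | right; exists j].
Qed.

Lemma bmax_eq c j : (forall i, P i -> F i <= c) -> P j -> F j = c -> \max_(i | P i) F i = c.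
Proof.
move=> H Pj Fj; apply/eqP; rewrite eqn_leq; apply/andP; split.
  by apply/bigmax_leqP.
by rewrite -Fj; apply: leq_bigmax_cond.
Qed.

Lemma bmin_eq c j : c <= m -> (forall i, P i -> c <= F i) -> P j -> F j = c ->
  \big[minn/m]_(i | P i) F i = c.
Proof.
move=> cm H Pj Fj; apply/eqP; rewrite eqn_leq; apply/andP; split.
  by rewrite -Fj; apply: bmin_le.
exact: bmin_ge.
Qed.
End Big.

Section Fwd.
Variables (T : finType) (e : rel T).
Hypotheses (esy : symmetric e) (eir : irreflexive e) (hn : 2 <= #|T|).

Lemma fort1 x : (forall y, ~~ e y x) -> fort e [set x].
Proof.
move=> iso; rewrite /fort; apply/andP; split; first by apply/set0Pn; exists x; rewrite inE.
apply/forallP => u; apply/implyP => _.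
have -> : [set y in [set x] | e u y] = set0.
  by apply/setP => y; rewrite !inE; apply/andP => -[/eqP -> eux]; move: (iso u); rewrite eux.
by rewrite cards0.
Qed.

Lemma one_nbr (F : {set T}) u z : fort e F -> u \notin F -> z \in F -> e u z ->
  (forall y, y \in F -> e u y -> y = z) -> False.
Proof.
case/andP => _ /forallP fF uF zF euz H; have := fF u; rewrite inE uF /= => /negP; apply.
apply/cards1P; exists z; apply/setP => y; rewrite !inE; apply/idP/idP.
  by case/andP => yF euy; rewrite (H y yF euy).
by move/eqP ->; rewrite zF euz.
Qed.

Variable K : {set T}.
Hypothesis fK : Form e K.

Lemma eK x y : e x y = [&& x != y, x \in K & y \in K].
Proof. by case: fK. Qed.

Lemma isoK x : x \notin K -> forall y, ~~ e y x.
Proof. by move=> xK y; rewrite eK (negbTE xK) !andbF. Qed.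

Lemma fort2 p q : p \in K -> q \in K -> p != q -> fort e [set p; q].
Proof.
move=> pK qK pq; rewrite /fort; apply/andP; split; first by apply/set0Pn; exists p; rewrite !inE eqxx.
apply/forallP => u; apply/implyP; rewrite !inE negb_or => /andP[up uq].
case: (boolP (u \in K)) => uK.
  have -> : [set y in [set p; q] | e u y] = [set p; q].
    apply/setP => y; rewrite !inE; case/orP: (orbN (y == p)) => [/eqP->|yp].
      by rewrite eqxx /= eK up uK pK.
    rewrite (negbTE yp) /=; case: (eqVneq y q) => [->|] //=; by rewrite eK uq uK qK.
  by rewrite cards2 pq.
have -> : [set y in [set p; q] | e u y] = set0.
  by apply/setP => y; rewrite !inE eK (negbTE uK) !andbF.
by rewrite cards0.
Qed.

Lemma other k : exists k', k' \in K /\ k' != k.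
Proof.
case: fK => /card_gt1P [p [q [pK qK pq]]] _.
case: (eqVneq p k) => [pk|pk]; last by exists p.
by exists q; split => //; rewrite -pk eq_sym.
Qed.

Lemma ZF_big (B : {set T}) : zero_forcing e B -> #|T| - 1 <= #|B|.
Proof.
move=> ZB; have := cardsC B; suff : #|~: B| <= 1 by lia.
rewrite leqNgt; apply/negP => /card_gt1P [p [q []]]; rewrite !inE => pB qB pq.
case: (boolP (p \in K)) => pK; last first.
  suff : ~~ zero_forcing e B by rewrite ZB.
  apply: (@fort_notZF _ _ [set p] B (fort1 (isoK pK))).
  by move=> x; rewrite inE => /eqP->.
case: (boolP (q \in K)) => qK; last first.
  suff : ~~ zero_forcing e B by rewrite ZB.
  apply: (@fort_notZF _ _ [set q] B (fort1 (isoK qK))).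
  by move=> x; rewrite inE => /eqP->.
suff : ~~ zero_forcing e B by rewrite ZB.
  apply: (@fort_notZF _ _ [set p; q] B (fort2 pK qK pq)).
by move=> x; rewrite !inE => /orP[]/eqP->.
Qed.

Lemma card_C1 (k : T) : #|~: [set k]| = #|T| - 1.
Proof. by have := cardsC [set k]; rewrite cards1; lia. Qed.

Lemma ZF_k k : k \in K -> zero_forcing e (~: [set k]).
Proof.
move=> kK; case: (other k) => k' [k'K k'k]; apply: (@zf1 _ _ esy eir hn k k').
by rewrite eK eq_sym k'k kK.
Qed.

Lemma Kk : exists k, k \in K.
Proof. by case: fK => /card_gt1P [p [_ [pK _]]] _; exists p. Qed.

Lemma Z_fwd : Znum e = #|T| - 1.
Proof.
case: Kk => k kK; apply: (bmin_eq (j := ~: [set k])); first exact: leq_subr.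
- exact: ZF_big.
- exact: ZF_k.
- exact: card_C1.
Qed.

Lemma minZF_k k : k \in K -> minset (zero_forcing e) (~: [set k]).
Proof.
move=> kK; apply/minsetP; split; first exact: ZF_k.
move=> C ZC sC; apply/eqP; rewrite eqEcard sC /= card_C1; exact: ZF_big.
Qed.

Lemma Zbar_fwd : Zbar e = #|T| - 1.
Proof.
case: Kk => k kK; apply: (bmax_eq (j := ~: [set k])); last 1 first.
- exact: card_C1.
- move=> B /minsetP [ZB minB]; have := cardsC B.
  case: (eqVneq (~: B) set0) => [C0|].
    have BT : B = setT by rewrite -[B]setCK C0 setC0.
    have := minB _ (ZF_k kK); rewrite BT subsetT => /(_ isT) Ek.
    by have := card_C1 k; rewrite Ek cardsT; lia.
  by rewrite -card_gt0; lia.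
- exact: minZF_k.
Qed.

Lemma ZIr_of_miss (S : {set T}) k : k \in K -> k \notin S -> ZIr_set e S.
Proof.
move=> kK kS; apply/forallP => x; apply/implyP => xS; apply/existsP.
case: (boolP (x \in K)) => xK.
  have xk : x != k by apply: contraNneq kS => <-.
  exists [set x; k]; apply/andP; split; first exact: fort2.
  apply/eqP/setP => y; rewrite !inE; case: (eqVneq y x) => [->|yx] /=; first by rewrite xS.
  by case: (eqVneq y k) => [->|]; rewrite ?(negbTE kS) ?andbF.
exists [set x]; apply/andP; split; first by apply: fort1; apply: isoK.
apply/eqP/setP => y; rewrite !inE; case: (eqVneq y x) => [->|]; by rewrite ?xS ?andbF.
Qed.

Lemma ZIr_miss (S : {set T}) : ZIr_set e S -> exists k, k \in K /\ k \notin S.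
Proof.
move=> ZS; case: (pickP [pred k | (k \in K) && (k \notin S)]) => [k /andP[kK kS]|H].
  by exists k.
have KS : forall k, k \in K -> k \in S.
  by move=> k kK; have := H k; rewrite /= kK /= => /negbFE.
case: Kk => k kK; case: (other k) => k' [k'K k'k].
have := (forallP ZS) k; rewrite KS //= => /existsP [F /andP[fF /eqP SF]].
have kF : k \in F.
  have : k \in S :&: F by rewrite SF inE.
  by rewrite inE => /andP[].
exfalso; apply: (@one_nbr F k' k fF).
- apply/negP => k'F; have : k' \in S :&: F by rewrite inE KS.
  by rewrite SF inE (negbTE k'k).
- exact: kF.
- by rewrite eK k'k k'K kK.
move=> y yF; rewrite eK => /and3P[_ _ yK].
have : y \in S :&: F by rewrite inE KS.
by rewrite SF inE => /eqP.
Qed.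

Lemma maxZIr_card (S : {set T}) : maxset (ZIr_set e) S -> #|S| = #|T| - 1.
Proof.
move=> /maxsetP [ZS maxS]; case: (ZIr_miss ZS) => k [kK kS].
have c1 : 0 < #|~: S| by apply/card_gt0P; exists k; rewrite inE.
suff : #|~: S| <= 1 by have := cardsC S; lia.
rewrite leqNgt; apply/negP => /card_gt1P [p [q []]]; rewrite !inE => pS qS pq.
pose x := if p == k then q else p.
have xS : x \notin S by rewrite /x; case: ifP.
have xk : x != k by rewrite /x; case: (eqVneq p k) => [<-|//]; rewrite eq_sym.
have Z' : ZIr_set e (x |: S) by apply: (ZIr_of_miss kK); rewrite !inE negb_or eq_sym xk.
have := maxS _ Z' (subsetUr _ _) => E.
by move: xS; rewrite -E !inE eqxx.
Qed.

Lemma maxZIr_ex : exists S, maxset (ZIr_set e) S.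
Proof.
have : ZIr_set e set0 by apply/forallP => x; rewrite inE.
by case/maxset_exists => S mS _; exists S.
Qed.

Lemma ZIR_fwd : ZIR e = #|T| - 1.
Proof.
case: maxZIr_ex => S mS; apply: (bmax_eq (j := S)) => //.
  by move=> B /maxZIr_card ->.
exact: maxZIr_card.
Qed.

Lemma zir_fwd : zir e = #|T| - 1.
Proof.
case: maxZIr_ex => S mS; apply: (bmin_eq (j := S)) => //; first exact: leq_subr.
  by move=> B /maxZIr_card ->.
exact: maxZIr_card.
Qed.

End Fwd.

Section Bwd.
Variables (T : finType) (e : rel T).
Hypotheses (esy : symmetric e) (eir : irreflexive e) (hn : 2 <= #|T|).

Lemma C_notwin (v w a b : T) : w != v -> e v a -> e w b -> ~~ zero_forcing e (~: [set v; w]) ->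
  forall u, u != w -> u != v -> e u w = e u v.
Proof.
move=> wv eva ewb nZ u uw uv; apply/eqP; apply: contraNT nZ => neq.
case euw: (e u w) neq; case euv: (e u v) => // _.
  rewrite setUC; apply: (@zf2 _ _ esy eir hn w v u a) => //.
  by rewrite euv.
apply: (@zf2 _ _ esy eir hn v w u b) => //; first by rewrite eq_sym.
by rewrite euw.
Qed.

Lemma nz_of_ZF1 (v : T) : zero_forcing e (~: [set v]) -> exists a, e v a.
Proof.
move=> Z; case: (pickP (e v)) => [a eva|H]; first by exists a.
suff : ~~ zero_forcing e (~: [set v]) by rewrite Z.
apply: (@fort_notZF _ _ [set v]).
  by apply: fort1 => y; rewrite esy H.
by move=> x; rewrite !inE negbK.
Qed.

Lemma card_C2 (v w : T) : v != w -> #|~: [set v; w]| = #|T| - 2.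
Proof. by move=> vw; have := cardsC [set v; w]; rewrite cards2 vw; lia. Qed.

Lemma set_C1 (B : {set T}) : #|B| = #|T| - 1 -> exists v, B = ~: [set v].
Proof.
move=> cB; have : #|~: B| == 1 by apply/eqP; have := cardsC B; lia.
by case/cards1P => v Hv; exists v; rewrite -Hv setCK.
Qed.

Lemma sub_C12 (v w : T) : ~: [set v; w] \subset ~: [set v].
Proof. by rewrite setCS; apply/subsetP => x; rewrite !inE => ->. Qed.

Lemma Z_bwd : Znum e = #|T| - 1 -> exists K, Form e K.
Proof.
move=> HZ; case: (bmin_ex (fun B => zero_forcing e B) (fun B => #|B|) #|T|).
  by rewrite -/(Znum e) HZ; lia.
move=> [B [ZB]]; rewrite -/(Znum e) HZ => /esym /set_C1 [v Bv]; subst B.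
case: (nz_of_ZF1 ZB) => a eva.
apply: (twin_form esy eir (v := v)) => //; first by exists v, a.
move=> w wv [b ewb]; apply: (C_notwin wv eva ewb); apply/negP => Zw.
have := bmin_le (fun B : {set T} => #|B|) #|T| Zw; rewrite -/(Znum e) HZ card_C2 ?(eq_sym v) //.
lia.
Qed.

Lemma Zbar_bwd : Zbar e = #|T| - 1 -> exists K, Form e K.
Proof.
move=> HZ; case: (bmax_ex (fun B => minset (zero_forcing e) B) (fun B => #|B|)).
  by rewrite -/(Zbar e) HZ; lia.
move=> [B [mB]]; rewrite -/(Zbar e) HZ => /esym /set_C1 [v Bv]; subst B.
case/minsetP: mB => ZB minB.
case: (nz_of_ZF1 ZB) => a eva.
apply: (twin_form esy eir (v := v)) => //; first by exists v, a.
move=> w wv [b ewb]; apply: (C_notwin wv eva ewb); apply/negP => Zw.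
have := minB _ Zw (sub_C12 v w) => E.
have := card_C2 (v := v) (w := w); rewrite eq_sym wv E (card_C1 hn) => /(_ isT); lia.
Qed.

Lemma maxZIr_bwd (S : {set T}) : maxset (ZIr_set e) S -> #|S| = #|T| - 1 -> exists K, Form e K.
Proof.
move=> /maxsetP [ZS maxS] /set_C1 [v Sv].
have edge : exists x y, e x y.
  case: (pickP [pred x | [exists y, e x y]]) => [x /existsP [y exy]|H].
    by exists x, y.
  exfalso.
  have ZT : ZIr_set e setT.
    apply/forallP => x; apply/implyP => _; apply/existsP; exists [set x].
    apply/andP; split.
      apply: fort1 => y; apply/negP => eyx; have := H y; rewrite /=.
      by move/negbT/existsPn/(_ x); rewrite eyx.
    by rewrite setTI.
  have := maxS _ ZT (subsetT _); rewrite Sv => E.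
  by have := card_C1 hn v; rewrite -E cardsT; lia.
apply: (twin_form esy eir (v := v)) => //.
move=> w wv [b ewb].
have wS : w \in S by rewrite Sv !inE.
have := (forallP ZS) w; rewrite wS /= => /existsP [F /andP[fF /eqP SF]].
have Fsub : forall y, y \in F -> y != v -> y = w.
  move=> y yF yv; have : y \in S :&: F by rewrite inE yF Sv !inE yv.
  by rewrite SF inE => /eqP.
have wF : w \in F.
  have : w \in S :&: F by rewrite SF inE.
  by rewrite inE => /andP[].
have vF : v \in F.
  apply: contraT => vF; exfalso.
  have bw : b != w by apply: contraTneq ewb => ->; rewrite eir.
  apply: (@one_nbr _ e F b w fF) => //.
  - apply/negP => bF; case: (eqVneq b v) => [bv|bv].
      by move: vF; rewrite -bv bF.
    by move: bw; rewrite (Fsub b bF bv) eqxx.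
  - by rewrite esy.
  move=> y yF _; apply: Fsub => //; apply: contraNneq vF => <-.
  by [].
move=> u uw uv.
have uF : u \notin F.
  apply/negP => uF.
  by move: uw; rewrite (Fsub u uF uv) eqxx.
apply/eqP; apply: contraT => neq; exfalso.
case euw: (e u w) neq; case euv: (e u v) => // _.
  apply: (@one_nbr _ e F u w fF) => // y yF euy.
  by apply: Fsub => //; apply: contraTneq euy => ->; rewrite euv.
apply: (@one_nbr _ e F u v fF) => // y yF euy.
case: (eqVneq y v) => // yv.
by move: euy; rewrite (Fsub y yF yv) euw.
Qed.

Lemma ZIR_bwd : ZIR e = #|T| - 1 -> exists K, Form e K.
Proof.
move=> HZ; case: (bmax_ex (fun B => maxset (ZIr_set e) B) (fun B => #|B|)).
  by rewrite -/(ZIR e) HZ; lia.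
move=> [B [mB]]; rewrite -/(ZIR e) HZ => /esym; exact: maxZIr_bwd.
Qed.

Lemma zir_bwd : zir e = #|T| - 1 -> exists K, Form e K.
Proof.
move=> HZ; case: (bmin_ex (fun B => maxset (ZIr_set e) B) (fun B => #|B|) #|T|).
  by rewrite -/(zir e) HZ; lia.
move=> [B [mB]]; rewrite -/(zir e) HZ => /esym; exact: maxZIr_bwd.
Qed.

End Bwd.

Section Iso.
Variables (T : finType) (e : rel T).
Hypotheses (esy : symmetric e) (eir : irreflexive e) (hn : 2 <= #|T|).

Definition P1 := exists r : nat, (2 <= #|T| - r) /\
         exists f : T -> 'I_#|T|, bijective f /\
           (forall x y, e x y = clique_plus_isolated (#|T| - r) (f x) (f y)).

Lemma P1_form : P1 -> exists K, Form e K.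
Proof.
move=> [r [hr [f [[g fg gf] Hf]]]].
exists [set x | f x < #|T| - r]; split; last first.
  move=> x y; rewrite Hf /clique_plus_isolated !inE (inj_eq (can_inj fg)).
  by rewrite andbA.
have h0 : 0 < #|T| by lia.
have h1 : 1 < #|T| by lia.
pose i0 : 'I_#|T| := Ordinal h0. pose i1 : 'I_#|T| := Ordinal h1.
have : [set g i0; g i1] \subset [set x | f x < #|T| - r].
  apply/subsetP => z; rewrite !inE => /orP[]/eqP->; rewrite gf /=; first [exact: (ltnW hr) | exact: hr].
move/subset_leq_card; apply: leq_trans; rewrite cards2.
have -> // : g i0 != g i1.
by apply/negP => /eqP /(f_equal f); rewrite !gf => /(f_equal val).
Qed.

Section Build.
Variable K : {set T}.
Let s := enum K ++ enum (~: K).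
Lemma size_s : size s = #|T|.
Proof. by rewrite size_cat -!cardE cardsC. Qed.
Lemma idx_lt x : index x s < #|T|.
Proof.
rewrite -size_s index_mem mem_cat !mem_enum inE; by case: (x \in K).
Qed.
Definition fb x : 'I_#|T| := Ordinal (idx_lt x).
Lemma fb_inj : injective fb.
Proof.
have memS : forall z, z \in s by move=> z; rewrite mem_cat !mem_enum inE; case: (_ \in K).
move=> x y /(f_equal val) /= H; exact: (index_inj x (memS x) (memS y) H).
Qed.
Lemma fb_K x : (fb x < #|K|) = (x \in K).
Proof.
rewrite /= /s index_cat mem_enum cardE; case: ifP => xK.
  by rewrite index_mem mem_enum.
by rewrite ltnNge leq_addr.
Qed.
End Build.

Lemma form_P1 : (exists K, Form e K) -> P1.
Proof.
move=> [K [cK HK]]; have cKT : #|K| <= #|T| by apply: max_card.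
exists (#|T| - #|K|); rewrite subKn //; split => //.
exists (@fb K); split.
  by apply: inj_card_bij; [exact: fb_inj | rewrite card_ord].
move=> x y; rewrite HK /clique_plus_isolated !fb_K (inj_eq (@fb_inj K)).
by rewrite andbA.
Qed.

End Iso.


Theorem proposition5p2 (T : finType) (e : rel T)
  (esym : symmetric e) (eirr : irreflexive e) (hn : 2 <= #|T|) :
  [<-> exists r : nat, (2 <= #|T| - r) /\
         exists f : T -> 'I_#|T|, bijective f /\
           (forall x y, e x y = clique_plus_isolated (#|T| - r) (f x) (f y));
       zir e = #|T| - 1;
       Znum e = #|T| - 1;
       Zbar e = #|T| - 1;
       ZIR e = #|T| - 1].
Proof.
tfae.
- by move=> /(P1_form hn) [K fK]; exact: (zir_fwd hn fK).
- by move=> /(zir_bwd esym eirr hn) [K fK]; exact: (Z_fwd esym eirr hn fK).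
- by move=> /(Z_bwd esym eirr hn) [K fK]; exact: (Zbar_fwd esym eirr hn fK).
- by move=> /(Zbar_bwd esym eirr hn) [K fK]; exact: (ZIR_fwd hn fK).
- by move=> /(ZIR_bwd esym eirr hn) /form_P1.
Qed.
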